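(* Let $k\in\mathbb{N}$, $C\ge0$, $z_1,\dots,z_k\ge1$, $\lambda_1,\dots,\lambda_k>0$ and $\mu_1,\dots,\mu_k>0$ with $Z=\mu_1z_1+\cdots+\mu_kz_k\ge\Lambda$. (a) If $\lambda_i<\mu_i$ for all $i$, then $$\sum_{\mathbf{r}\in\mathscr{H}^k_+(Z)}\left(1+\sum_{i=1}^k\lambda_ir_i-Z\right)^C\prod_{i=1}^k\frac{e^{-z_i}z_i^{r_i}}{r_i!}\ll_{k,\boldsymbol{\lambda},\boldsymbol{\mu},C}\mathrm{Prob}(\mathscr{H}^k(Z)).$$ (b) If $\log(\mu_i/\lambda_i)<\lambda_i$ for all $i$, then $$\sum_{\mathbf{r}\in\mathscr{H}^k_-(Z)}\left(1+Z-\sum_{i=1}^k\lambda_ir_i\right)^C\prod_{i=1}^k\frac{e^{-z_i}(e^{\lambda_i}z_i)^{r_i}}{r_i!}\ll_{k,\boldsymbol{\lambda},\boldsymbol{\mu},C}e^Z\,\mathrm{Prob}(\mathscr{H}^k(Z)).$$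
   Context: $\Lambda=\max_i\lambda_i$. $\mathrm{Prob}$ denotes the $k$-dimensional Poisson distribution with parameters $z_1,\dots,z_k$, giving $(r_1,\dots,r_k)\in(\mathbb{N}\cup\{0\})^k$ probability $\prod_ie^{-z_i}z_i^{r_i}/r_i!$. For $R\ge\Lambda$: $\mathscr{H}^k(R)=\{\mathbf{r}\in(\mathbb{N}\cup\{0\})^k: R-\Lambda<\sum_i\lambda_ir_i\le R\}$, $\mathscr{H}^k_-(R)=\{\mathbf{r}\in(\mathbb{N}\cup\{0\})^k:\sum_i\lambda_ir_i\le R\}$, $\mathscr{H}^k_+(R)=\{\mathbf{r}\in(\mathbb{N}\cup\{0\})^k:\sum_i\lambda_ir_i\ge R\}$. *)

(* Defs.v *)
From HB Require Import structures.
From mathcomp Require Import all_boot all_order all_algebra.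
From mathcomp Require Import all_classical all_reals all_analysis.
Set Implicit Arguments. Unset Strict Implicit. Unset Printing Implicit Defensive.
Import Order.TTheory GRing.Theory Num.Theory.
Local Open Scope classical_set_scope.
Local Open Scope ring_scope.

Section Defs.
Variables (R : realType) (k : nat).

Definition midx := {ffun 'I_k -> nat}.

Definition Lam (lam : 'I_k -> R) : R := \big[Num.max/0]_(i < k) lam i.

Definition lsum (lam : 'I_k -> R) (r : midx) : R := \sum_(i < k) lam i * (r i)%:R.

Definition Zval (mu z : 'I_k -> R) : R := \sum_(i < k) mu i * z i.

Definition Hset (lam : 'I_k -> R) (X : R) : set midx :=
  [set r | X - Lam lam < lsum lam r /\ lsum lam r <= X].
Definition Hminus (lam : 'I_k -> R) (X : R) : set midx :=
  [set r | lsum lam r <= X].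
Definition Hplus (lam : 'I_k -> R) (X : R) : set midx :=
  [set r | X <= lsum lam r].

Definition poiw (z : 'I_k -> R) (r : midx) : R :=
  \prod_(i < k) (expR (- z i) * z i ^+ r i / (r i)`!%:R).

Definition Prob (z : 'I_k -> R) (S : set midx) : \bar R :=
  esum S (fun r => (poiw z r)%:E).

End Defs.

(* Main.v *)
Require Import Defs.
From HB Require Import structures.
From mathcomp Require Import all_boot all_order all_algebra finmap.
From mathcomp Require Import all_classical all_reals all_analysis.
From mathcomp Require Import ring lra.
Import Order.TTheory GRing.Theory Num.Theory.
Set Implicit Arguments. Unset Strict Implicit. Unset Printing Implicit Defensive.
Local Open Scope classical_set_scope.
Local Open Scope ring_scope.

Section Gen.
Variables (R : realType) (k : nat).

Definition upd (r : midx k) (i : 'I_k) (n : nat) : midx k :=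
  [ffun j => if j == i then n else r j].

Lemma prod_upd (F : 'I_k -> nat -> R) r i n :
  \prod_j F j (upd r i n j) = F i n * \prod_(j | j != i) F j (r j).
Proof.
rewrite (bigD1 i) //= ffunE eqxx; congr (_ * _).
by apply: eq_bigr => j /negbTE ne; rewrite ffunE ne.
Qed.

Lemma sum_upd (F : 'I_k -> nat -> R) r i n :
  \sum_j F j (upd r i n j) = F i n + \sum_(j | j != i) F j (r j).
Proof.
rewrite (bigD1 i) //= ffunE eqxx; congr (_ + _).
by apply: eq_bigr => j /negbTE ne; rewrite ffunE ne.
Qed.

Lemma fin_prod (G : 'I_k -> nat -> R) (c : 'I_k -> R) (l : seq (midx k)) :
  (forall i n, 0 <= G i n) -> (forall i N, \sum_(n < N) G i n <= c i) -> uniq l ->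
  \sum_(r <- l) \prod_i G i (r i) <= \prod_i c i.
Proof.
move=> G0 Gc ul.
set M := (\max_(r <- l) \max_i r i)%N.
have HM : forall r, r \in l -> forall i, (r i <= M)%N.
  move=> r rl i.
  have h1 : (r i <= \max_i r i)%N by exact: (@leq_bigmax _ (fun i => r i) i).
  apply: (leq_trans h1); rewrite /M.
  by apply: (@leq_bigmax_seq _ l xpredT (fun r : midx k => (\max_i r i)%N) r rl).
pose phi (r : midx k) : {ffun 'I_k -> 'I_M.+1} := [ffun i => inord (r i)].
have valphi : forall r, r \in l -> forall i, (phi r i : nat) = r i.
  by move=> r rl i; rewrite ffunE inordK // ltnS HM.
have -> : \sum_(r <- l) \prod_i G i (r i) = \sum_(f <- map phi l) \prod_i G i (f i).
  rewrite big_map big_seq [RHS]big_seq; apply: eq_bigr => r rl.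
  by apply: eq_bigr => i _; rewrite valphi.
rewrite big_uniq; last first.
  rewrite map_inj_in_uniq // => r1 r2 h1 h2 e; apply/ffunP => i.
  by rewrite -(valphi r1 h1) -(valphi r2 h2) e.
apply: (@le_trans _ _ (\sum_(f : {ffun 'I_k -> 'I_M.+1}) \prod_i G i (f i))).
  rewrite [leRHS](bigID (fun f => f \in map phi l)) /= lerDl.
  by apply: sumr_ge0 => f _; apply: prodr_ge0 => i _.
rewrite -(bigA_distr_bigA (fun i (j : 'I_M.+1) => G i j)) /=.
apply: ler_prod => i _; apply/andP; split; last exact: Gc.
by apply: sumr_ge0.
Qed.

Lemma esum_le_fin (S : set (midx k)) (h : midx k -> R) (B : R) :
  (forall r, 0 <= h r) ->
  (forall l : seq (midx k), uniq l -> \sum_(r <- l) h r <= B) ->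
  (esum S (fun r => (h r)%:E) <= B%:E)%E.
Proof.
move=> h0 hB; apply: ge_ereal_sup => _ [X [finX XS] <-].
rewrite fsbig_finite // sumEFin lee_fin; apply: hB; exact: fset_uniq.
Qed.

Lemma esum_scale (H : set (midx k)) (p : midx k -> R) (a : R) :
  0 <= a -> (forall r, 0 <= p r) ->
  (esum H (fun s => (a * p s)%:E) <= a%:E * esum H (fun s => (p s)%:E))%E.
Proof.
move=> a0 p0; apply: ge_ereal_sup => _ [X [finX XH] <-].
rewrite fsbig_finite // sumEFin -mulr_sumr EFinM; apply: lee_wpmul2l; first by rewrite lee_fin.
rewrite -sumEFin -fsbig_finite //; apply: ereal_sup_ubound; by exists X.
Qed.

Lemma transfer (S H : set (midx k)) (f p : midx k -> R) (G : midx k -> 'I_k -> nat -> R)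
    (c : 'I_k -> R) (m : R) :
  (forall r, 0 <= f r) -> (forall r, 0 <= p r) -> (forall s i n, 0 <= G s i n) -> 0 <= m ->
  (forall s i N, \sum_(n < N) G s i n <= c i) ->
  (forall r, S r -> exists s, H s /\ f r <= m * (\prod_i G s i (r i)) * p s) ->
  (esum S (fun r => (f r)%:E) <= (m * \prod_i c i)%:E * esum H (fun s => (p s)%:E))%E.
Proof.
move=> f0 p0 G0 m0 Gc hyp.
have c0 : forall i, 0 <= c i.
  by move=> i; have := Gc [ffun=> 0%N] i 0%N; rewrite big_ord0.
have a0 : forall s r, 0 <= m * \prod_i G s i (r i) * p s.
  by move=> s r; rewrite mulr_ge0 // mulr_ge0 //; apply: prodr_ge0.
apply: (@le_trans _ _ (esum S (fun r => esum H (fun s => (m * \prod_i G s i (r i) * p s)%:E)))).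
  apply: le_esum => r Sr; have [s [Hs le]] := hyp r Sr.
  apply: esum_ge; exists [set s]; first by split; [exact: finite_set1 | move=> x ->].
  by rewrite fsbig_set1 lee_fin.
rewrite esum_esum; last by move=> r s _ _; rewrite lee_fin.
rewrite (reindex_esum (H `*`` (fun _ => S)) _ (fun x => (x.2, x.1))); last first.
  split=> //=.
  - by move=> [i j] [/=].
  - by move=> [i1 i2] [j1 j2] /= _ _ [] -> ->.
  - by move=> [i1 i2] [Pi1 Qi2] /=; exists (i2, i1).
rewrite -(@esum_esum _ _ _ H (fun _ => S) (fun s r => (m * \prod_i G s i (r i) * p s)%:E)); last first.
  by move=> s r _ _; rewrite lee_fin.
apply: (@le_trans _ _ (esum H (fun s => ((m * \prod_i c i) * p s)%:E))); last first.
  apply: esum_scale => //; rewrite mulr_ge0 //; exact: prodr_ge0.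
apply: le_esum => s Hs; apply: esum_le_fin => // l ul.
rewrite -big_distrl /= -big_distrr /=; apply: ler_wpM2r => //; apply: ler_wpM2l => //.
exact: fin_prod.
Qed.
End Gen.

Section Gen2.
Variables (R : realType) (k : nat).

Lemma geomA (t : R) (s N : nat) : 0 <= t -> t < 1 ->
  \sum_(n < N) (if (s <= n)%N then t ^+ (n - s) else 0) <= (1 - t)^-1.
Proof.
move=> t0 t1.
have hH : forall N, (if (s <= N.+1)%N then t ^+ (N.+1 - s) else 1)
   + (1 - t) * (if (s <= N)%N then t ^+ (N - s) else 0)
   <= (if (s <= N)%N then t ^+ (N - s) else 1).
  move=> M; case: (leqP s M) => h.
    rewrite (leqW h) subSn // exprS; set x := t ^+ (M - s); lra.
  rewrite mulr0 addr0; case: ifP => // h2.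
  by rewrite (_ : (M.+1 - s = 0)%N) ?expr0 //; apply/eqP; rewrite subn_eq0.
have inv : forall N, (1 - t) * \sum_(n < N) (if (s <= n)%N then t ^+ (n - s) else 0)
   + (if (s <= N)%N then t ^+ (N - s) else 1) <= 1.
  elim=> [|M IH].
    by rewrite big_ord0 mulr0 add0r; case: ifP => // _; rewrite sub0n expr0.
  rewrite big_ord_recr /= mulrDr; have := hH M; move: IH.
  set A := \sum_(i < M) _. set B := (if _ then _ else _). set B2 := (if _ then _ else _). set B3 := (if _ then _ else _). lra.
have := inv N; set S := \sum_(n < N) _.
have h0 : 0 <= (if (s <= N)%N then t ^+ (N - s) else 1).
  by case: ifP => _ //; apply: exprn_ge0.
move=> h; rewrite -(mulr1 (1 - t)^-1) ler_pdivlMl; last by lra.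
lra.
Qed.

Lemma geomB (t : R) (s N : nat) : 0 <= t -> t < 1 ->
  \sum_(n < N) (if (n <= s)%N then t ^+ (s - n) else 0) <= (1 - t)^-1.
Proof.
move=> t0 t1.
have inv : forall N, (1 - t) * \sum_(n < N) (if (n <= s)%N then t ^+ (s - n) else 0)
   <= t ^+ (s.+1 - N).
  elim=> [|M IH].
    by rewrite big_ord0 mulr0; apply: exprn_ge0.
  rewrite big_ord_recr /= mulrDr; case: (leqP M s) => h.
    move: IH; rewrite subSS (subSn h) exprS; set x := t ^+ (s - M); lra.
  rewrite mulr0 addr0 subSS (_ : (s - M = 0)%N); last by apply/eqP; rewrite subn_eq0 ltnW.
  by move: IH; rewrite (_ : (s.+1 - M = 0)%N) //; apply/eqP; rewrite subn_eq0.
have := inv N; have h1 : t ^+ (s.+1 - N) <= 1 by apply: exprn_ile1 => //; lra.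
move=> h; rewrite -(mulr1 (1 - t)^-1) ler_pdivlMl; last by lra.
lra.
Qed.

Lemma prod_step (F : 'I_k -> nat -> R) (r : midx k) i n t :
  (forall j m, 0 <= F j m) -> 0 <= t -> t * F i (r i) <= F i n ->
  t * \prod_j F j (r j) <= \prod_j F j (upd r i n j).
Proof.
move=> F0 t0 h; rewrite prod_upd (bigD1 i) //= mulrA; apply: ler_wpM2r => //.
by apply: prodr_ge0.
Qed.

Lemma lsum_upS (lam : 'I_k -> R) (r : midx k) i :
  lsum lam (upd r i (r i).+1) = lsum lam r + lam i.
Proof.
have E := sum_upd (fun j n => lam j * n%:R) r i (r i).+1; simpl in E.
rewrite /lsum E [in RHS](bigD1 i) //= -addn1 natrD mulrDr mulr1; lra.
Qed.

Lemma poiw_upS (z : 'I_k -> R) (r : midx k) i :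
  poiw z (upd r i (r i).+1) * ((r i).+1)%:R = poiw z r * z i.
Proof.
have E := prod_upd (fun j n => expR (- z j) * z j ^+ n / n`!%:R) r i (r i).+1; simpl in E.
rewrite /poiw E [in RHS](bigD1 i) //=.
have h1 : (r i)`!%:R != 0 :> R by rewrite pnatr_eq0 -lt0n fact_gt0.
have h2 : (r i).+1%:R != 0 :> R by rewrite pnatr_eq0.
rewrite factS natrM exprS; field; rewrite h1 /=; move: h2; by rewrite -natr1 addrC.
Qed.

Lemma poiw_ge0 (z : 'I_k -> R) (r : midx k) : (forall i, 0 <= z i) -> 0 <= poiw z r.
Proof.
move=> z0; apply: prodr_ge0 => i _; rewrite mulr_ge0 // ?invr_ge0 //.
by rewrite mulr_ge0 // ?exprn_ge0 // ltW // expR_gt0.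
Qed.

Definition nsum (r : midx k) := (\sum_j r j)%N.

Lemma nsum_upS (r : midx k) i : nsum (upd r i (r i).+1) = (nsum r).+1.
Proof.
rewrite /nsum (bigD1 i) //= [in RHS](bigD1 i) //= ffunE eqxx addSn; congr (_.+1 + _)%N.
by apply: eq_bigr => j /negbTE ne; rewrite ffunE ne.
Qed.

Lemma upd_pred (r : midx k) i : (0 < r i)%N ->
  upd (upd r i (r i).-1) i ((upd r i (r i).-1) i).+1 = r.
Proof.
move=> h; apply/ffunP => j; rewrite !ffunE eqxx.
by case: eqP => [->|_] //; rewrite prednK.
Qed.

Lemma le_nsum (r : midx k) i : (r i <= nsum r)%N.
Proof. by rewrite /nsum (bigD1 i) //= leq_addr. Qed.

Lemma lam_le_Lam (lam : 'I_k -> R) i : lam i <= Lam lam.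
Proof. by rewrite /Lam; apply: (le_bigmax _ _ i). Qed.

Lemma term_le_sum (F : 'I_k -> R) i : (forall j, 0 <= F j) -> F i <= \sum_j F j.
Proof. by move=> F0; rewrite (bigD1 i) //= lerDl; apply: sumr_ge0. Qed.

Lemma absorb (C eps x : R) : 0 <= C -> 0 < eps -> eps <= 1 -> 0 <= x ->
  (1 + x) `^ C <= expR (C * - ln eps) * expR (C * eps * x).
Proof.
move=> C0 e0 e1 x0.
rewrite /powR (_ : (1 + x == 0) = false); last by apply/negbTE; rewrite gt_eqF //; lra.
rewrite -expRD ler_expR -mulrA -mulrDr; apply: ler_wpM2l => //.
have pe : 0 < expR (eps * x) / eps by rewrite divr_gt0 // expR_gt0.
have h : 1 + x <= expR (eps * x) / eps.
  rewrite ler_pdivlMr //; have := expR_ge1Dx (eps * x); nra.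
have hl : ln (1 + x) <= ln (expR (eps * x) / eps).
  rewrite ler_ln ?posrE //; lra.
rewrite lnM ?posrE ?expR_gt0 ?invr_gt0 // expRK lnV ?posrE // in hl; lra.
Qed.
End Gen2.

Lemma partA (R : realType) (k : nat) (lam mu : 'I_k -> R) (C : R) :
  (0 < k)%N -> 0 <= C -> (forall i, 0 < lam i) -> (forall i, 0 < mu i) ->
  (forall i, lam i < mu i) ->
    exists c : R, 0 < c /\
      forall z : 'I_k -> R, (forall i, 1 <= z i) -> Lam lam <= Zval mu z ->
        (esum (Hplus lam (Zval mu z))
           (fun r => ((1 + lsum lam r - Zval mu z) `^ C * poiw z r)%:E)
         <= c%:E * Prob z (Hset lam (Zval mu z)))%E.
Proof.
move=> k0 C0 lam0 mu0 lm.
have lnp : forall i, 0 < ln (mu i / lam i).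
  by move=> i; apply: ln_gt0; rewrite ltr_pdivlMr // mul1r.
pose D := 1 + \sum_j 2 * lam j / ln (mu j / lam j).
have dpos : forall j, 0 < 2 * lam j / ln (mu j / lam j).
  by move=> j; rewrite divr_gt0 // mulr_gt0.
have D1 : 1 <= D by rewrite /D lerDl sumr_ge0 // => j _; apply: ltW.
pose delta := D^-1.
have d0 : 0 < delta by rewrite invr_gt0; lra.
have d1 : delta <= 1 by rewrite invf_le1 //; lra.
have dl : forall i, delta * lam i <= ln (mu i / lam i) / 2.
  move=> i; have hi : 2 * lam i / ln (mu i / lam i) <= D.
    have := @term_le_sum R k (fun j => 2 * lam j / ln (mu j / lam j)) i (fun j => ltW (dpos j)).
    rewrite /D; lra.
  move: hi; rewrite ler_pdivrMr // => hi.
  rewrite mulrC ler_pdivrMr; [|lra]; have := lnp i; lra.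
pose th i := expR (delta * lam i) * lam i / mu i.
have th0 : forall i, 0 <= th i.
  by move=> i; rewrite /th divr_ge0 ?mulr_ge0 // ltW // ?expR_gt0.
have th1 : forall i, th i < 1.
  move=> i; rewrite /th ltr_pdivrMr // mul1r -ltr_pdivlMr //.
  have : expR (delta * lam i) < expR (ln (mu i / lam i)).
    by rewrite ltr_expR; have := dl i; have := lnp i; lra.
  by rewrite lnK // posrE divr_gt0.
pose eps := delta / (C + 1).
have e0 : 0 < eps by rewrite /eps divr_gt0 //; lra.
have e1 : eps <= 1 by rewrite /eps ler_pdivrMr; lra.
have Ce : C * eps <= delta by rewrite /eps mulrA ler_pdivrMr; nra.
pose K := expR (C * - ln eps).
have K0 : 0 < K by apply: expR_gt0.
exists (K * \prod_i (1 - th i)^-1); split.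
  rewrite mulr_gt0 // prodr_gt0 // => i _; rewrite invr_gt0; have := th1 i; lra.
move=> z z1 LZ.
set Z := Zval mu z.
have zp : forall i, 0 < z i by move=> i; have := z1 i; lra.
have z0 : forall i, 0 <= z i by move=> i; apply: ltW.
pose G (s : midx k) i n := if (s i <= n)%N then th i ^+ (n - s i) else 0.
have G0 : forall s i n, 0 <= G s i n.
  by move=> s i n; rewrite /G; case: ifP => _ //; apply: exprn_ge0.
pose phi r := expR (delta * (lsum lam r - Z)) * poiw z r.
have phi0 : forall r, 0 <= phi r.
  by move=> r; rewrite /phi mulr_ge0 ?poiw_ge0 // ltW // expR_gt0.
have Lpos : 0 < Lam lam.
  by have := lam_le_Lam lam (Ordinal k0); have := lam0 (Ordinal k0); lra.
have pick : forall r, Z < lsum lam r ->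
    exists i, mu i * z i < lam i * (r i)%:R /\ (0 < r i)%N.
  move=> r hr.
  have : ~ (forall i, lam i * (r i)%:R <= mu i * z i).
    move=> hall; have : lsum lam r <= Z.
      by rewrite /lsum /Z /Zval; apply: ler_sum => i _; exact: hall i.
    lra.
  move/existsNP => [i hi].
  have hi' : mu i * z i < lam i * (r i)%:R by rewrite ltNge; apply/negP.
  exists i; split => //; rewrite lt0n; apply/negP => /eqP r0; move: hi'.
  by rewrite r0 mulr0; have := mulr_gt0 (mu0 i) (zp i); lra.
have desc : forall n r, (nsum r <= n)%N -> Z - Lam lam < lsum lam r ->
   exists s, Hset lam Z s /\ phi r <= \prod_i G s i (r i) * phi s.
  elim=> [|n IH] r hn hL; (case: (lerP (lsum lam r) Z) => hLZ;
    [exists r; split; [by split | ]; rewrite big1 ?mul1r // => i _;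
       by rewrite /G leqnn subnn expr0 |]).
    have [i [_ ri]] := pick r hLZ.
    have := leq_trans (le_nsum r i) hn; rewrite leqn0 => /eqP ri0.
    by rewrite ri0 in ri.
  have [i [hi ri]] := pick r hLZ.
  set r' := upd r i (r i).-1.
  have Er : upd r' i (r' i).+1 = r := upd_pred ri.
  have hn' : (nsum r' <= n)%N by move: hn; rewrite -Er nsum_upS.
  have hL' : lsum lam r = lsum lam r' + lam i by rewrite -{1}Er lsum_upS.
  have ri' : (r' i).+1 = r i by rewrite ffunE eqxx prednK.
  have hp : poiw z r * (r i)%:R = poiw z r' * z i.
    by have := poiw_upS z r' i; rewrite Er ri'.
  have [s [Hs hs]] := IH r' hn' (ltac:(have := lam_le_Lam lam i; lra)).
  exists s; split => //.
  have hpr : poiw z r * mu i <= lam i * poiw z r'.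
    have p0 := poiw_ge0 r' z0; have p1 := poiw_ge0 r z0.
    have rip : 0 < (r i)%:R :> R by rewrite ltr0n.
    rewrite -(ler_pM2r rip).
    have e := congr1 (fun v => mu i * v) hp; simpl in e.
    have := ler_wpM2l p0 (ltW hi); lra.
  have step1 : phi r <= th i * phi r'.
    rewrite /phi hL' (_ : delta * (lsum lam r' + lam i - Z)
        = delta * lam i + delta * (lsum lam r' - Z)); last by ring.
    rewrite expRD /th.
    have -> : expR (delta * lam i) * lam i / mu i *
        (expR (delta * (lsum lam r' - Z)) * poiw z r')
      = expR (delta * lam i) * expR (delta * (lsum lam r' - Z)) * (lam i * poiw z r' / mu i).
      by rewrite /=; field; apply/negbT; rewrite gt_eqF.
    apply: ler_wpM2l; first by rewrite mulr_ge0 // ltW // expR_gt0.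
    by rewrite ler_pdivlMr.
  have step2 : th i * \prod_j G s j (r' j) <= \prod_j G s j (r j).
    have := @prod_step R k (G s) r' i (r' i).+1 (th i) (G0 s) (th0 i).
    rewrite Er; apply; rewrite /G; case: (leqP (s i) (r' i)) => h.
      by rewrite (leqW h) subSn // exprS.
    by rewrite mulr0; case: ifP => _ //; apply: exprn_ge0.
  apply: (le_trans step1); apply: le_trans (ler_wpM2l (th0 i) hs) _.
  by rewrite mulrA; apply: ler_wpM2r.
apply: (transfer (G := G) (m := K) (c := fun i => (1 - th i)^-1)).
- by move=> r; rewrite mulr_ge0 ?powR_ge0 ?poiw_ge0.
- by move=> r; rewrite poiw_ge0.
- exact: G0.
- exact: ltW.
- by move=> s i N; apply: geomA.
move=> r hr; have hZ : Z <= lsum lam r := hr.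
have [s [Hs hs]] := desc (nsum r) r (leqnn _) (ltac:(lra)).
exists s; split => //.
set x := lsum lam r - Z.
have x0 : 0 <= x by rewrite /x; lra.
rewrite (_ : 1 + lsum lam r - Z = 1 + x); last by rewrite /x; ring.
have ha := absorb C0 e0 e1 x0.
have hb : expR (C * eps * x) <= expR (delta * x) by rewrite ler_expR; nra.
apply: (le_trans (ler_wpM2r (poiw_ge0 r z0) (le_trans ha (ler_wpM2l (ltW K0) hb)))).
rewrite -mulrA -[K * _ * _]mulrA; apply: ler_wpM2l; first exact: ltW.
apply: (le_trans hs); apply: ler_wpM2l; first by apply: prodr_ge0.
rewrite /phi -[leRHS]mul1r; apply: ler_wpM2r; first by apply: poiw_ge0.
rewrite expR_le1; case: Hs => _ hs2; nra.
Qed.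

Lemma expR_ge1' (R : realType) (x : R) : 0 <= x -> 1 <= expR x.
Proof. by move=> x0; rewrite -expR0 ler_expR. Qed.

Lemma prod_exp_poiw (R : realType) (k : nat) (lam z : 'I_k -> R) (r : midx k) :
  \prod_(i < k) (expR (- z i) * (expR (lam i) * z i) ^+ r i / (r i)`!%:R)
  = expR (lsum lam r) * poiw z r.
Proof.
rewrite /lsum expR_sum /poiw -big_split /=; apply: eq_bigr => i _.
by rewrite (mulrC (lam i)) expRM_natl exprMn; ring.
Qed.

Lemma partB (R : realType) (k : nat) (lam mu : 'I_k -> R) (C : R) :
  (0 < k)%N -> 0 <= C -> (forall i, 0 < lam i) -> (forall i, 0 < mu i) ->
  (forall i, ln (mu i / lam i) < lam i) ->
    exists c : R, 0 < c /\
      forall z : 'I_k -> R, (forall i, 1 <= z i) -> Lam lam <= Zval mu z ->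
        (esum (Hminus lam (Zval mu z))
           (fun r => ((1 + Zval mu z - lsum lam r) `^ C *
              \prod_(i < k) (expR (- z i) * (expR (lam i) * z i) ^+ r i / (r i)`!%:R))%:E)
         <= (expR (Zval mu z) * c)%:E * Prob z (Hset lam (Zval mu z)))%E.
Proof.
move=> k0 C0 lam0 mu0 hlm.
pose be i := lam i - ln (mu i / lam i).
have be0 : forall i, 0 < be i by move=> i; rewrite /be; have := hlm i; lra.
pose D := 2 + \sum_j 2 * lam j / be j.
have dpos : forall j, 0 < 2 * lam j / be j.
  by move=> j; rewrite divr_gt0 // mulr_gt0.
have D2 : 2 <= D by rewrite /D lerDl sumr_ge0 // => j _; apply: ltW.
pose eta := D^-1.
have et0 : 0 < eta by rewrite invr_gt0; lra.
have et1 : eta <= 2^-1 by rewrite /eta lef_pV2 ?posrE //; lra.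
have etl : forall i, eta * lam i <= be i / 2.
  move=> i; have hi : 2 * lam i / be i <= D.
    have := @term_le_sum R k (fun j => 2 * lam j / be j) i (fun j => ltW (dpos j)).
    rewrite /D; lra.
  move: hi; rewrite ler_pdivrMr // => hi.
  rewrite mulrC ler_pdivrMr; [|lra]; have := be0 i; lra.
pose ga := 1 - eta.
have h21 : (2^-1 : R) <= 1 by rewrite invf_le1 //; lra.
have ga0 : 0 <= ga by rewrite /ga; lra.
pose th i := expR (- (ga * lam i)) * mu i / lam i.
have th0 : forall i, 0 <= th i.
  by move=> i; rewrite /th divr_ge0 ?mulr_ge0 // ltW // ?expR_gt0.
have th1 : forall i, th i < 1.
  move=> i; rewrite /th -mulrA.
  have h : mu i / lam i < expR (ga * lam i).
    rewrite -[X in X < _]lnK ?posrE ?divr_gt0 // ltr_expR.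
    have := etl i; have := be0 i; rewrite /be /ga; lra.
  by move: h; rewrite -(ltr_pM2l (expR_gt0 (- (ga * lam i)))) -expRD addNr expR0.
pose kap := \sum_j (mu j)^-1.
have kap_ge : forall i, (mu i)^-1 <= kap.
  move=> i; apply: (@term_le_sum R k (fun j => (mu j)^-1) i).
  by move=> j; rewrite invr_ge0 ltW.
have kap0 : 0 <= kap by apply: sumr_ge0 => j _; rewrite invr_ge0 ltW.
pose T := \sum_j lam j.
have T0 : 0 <= T by apply: sumr_ge0 => j _; apply: ltW.
pose eps := eta / (C + 1).
have e0 : 0 < eps by rewrite /eps divr_gt0 //; lra.
have e1 : eps <= 1 by rewrite /eps ler_pdivrMr; lra.
have Ce : C * eps <= eta by rewrite /eps mulrA ler_pdivrMr; nra.
pose K := expR (C * - ln eps).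
have K0 : 0 < K by apply: expR_gt0.
pose ell := (\sum_j (lam j)^-1)^-1.
have sl0 : 0 < \sum_j (lam j)^-1.
  rewrite (bigD1 (Ordinal k0)) //=; apply: ltr_wpDr.
    by apply: sumr_ge0 => j _; rewrite invr_ge0 ltW.
  by rewrite invr_gt0.
have ell0 : 0 < ell by rewrite invr_gt0.
have ell_le : forall i, ell <= lam i.
  move=> i; rewrite /ell -[lam i]invrK lef_pV2 ?posrE ?invr_gt0 //.
  by apply: (@term_le_sum R k (fun j => (lam j)^-1) i) => j; rewrite invr_ge0 ltW.
exists (K * expR (kap * T) * \prod_i (1 - th i)^-1); split.
  rewrite mulr_gt0 ?mulr_gt0 ?expR_gt0 // prodr_gt0 // => i _.
  by rewrite invr_gt0; have := th1 i; lra.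
move=> z z1 LZ.
set Z := Zval mu z.
have zp : forall i, 0 < z i by move=> i; have := z1 i; lra.
have z0 : forall i, 0 <= z i by move=> i; apply: ltW.
pose G (s : midx k) i n := if (n <= s i)%N then th i ^+ (s i - n) else 0.
have G0 : forall s i n, 0 <= G s i n.
  by move=> s i n; rewrite /G; case: ifP => _ //; apply: exprn_ge0.
pose psi r := expR (ga * (lsum lam r - Z)) * poiw z r.
have psi0 : forall r, 0 <= psi r.
  by move=> r; rewrite /psi mulr_ge0 ?poiw_ge0 // ltW // expR_gt0.
pose mm r := Num.min (Z - lsum lam r) T.
have Lpos : 0 < Lam lam.
  by have := lam_le_Lam lam (Ordinal k0); have := lam0 (Ordinal k0); lra.
have desc : forall n r, lsum lam r <= Z -> Z - lsum lam r < n%:R * ell ->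
  exists s, Hset lam Z s /\ psi r <= expR (kap * mm r) * \prod_i G s i (r i) * psi s.
  elim=> [|n IH] r hLZ hn.
    by move: hn; rewrite mul0r; lra.
  case: (ltrP (Z - Lam lam) (lsum lam r)) => hH.
    exists r; split; first by split.
    rewrite big1 ?mulr1; last by move=> i _; rewrite /G leqnn subnn expr0.
    rewrite -[leLHS]mul1r; apply: ler_wpM2r => //; apply: expR_ge1'.
    apply: mulr_ge0 => //; rewrite /mm le_min; apply/andP; split; lra.
  have hlt : lsum lam r < Z by lra.
  have [i Q] : exists i, (r i).+1%:R * lam i <=
      mu i * z i * expR (kap * (mm r - mm (upd r i (r i).+1))).
    case: (ltrP (lsum lam r) (Z - T)) => hT.
      have : ~ (forall i, mu i * z i <= lam i * (r i).+1%:R).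
        move=> hall; have : Z <= lsum lam r + T.
          rewrite /Z /Zval /lsum /T -big_split /=; apply: ler_sum => i _.
          by have := hall i; rewrite -natr1 mulrDr mulr1.
        lra.
      move/existsNP => [i hi]; exists i.
      have hi' : lam i * (r i).+1%:R < mu i * z i by rewrite ltNge; apply/negP.
      have hm : mm (upd r i (r i).+1) <= mm r.
        rewrite /mm lsum_upS le_min; apply/andP; split; rewrite ge_min; apply/orP;
          [left | right]; have := lam0 i; lra.
      have he : 1 <= expR (kap * (mm r - mm (upd r i (r i).+1))).
        by apply: expR_ge1'; apply: mulr_ge0 => //; lra.
      have mz : 0 <= mu i * z i by rewrite mulr_ge0 // ltW.
      have := ler_wpM2l mz he; lra.
    have mmr : mm r = Z - lsum lam r.
      by rewrite /mm; apply/eqP; rewrite eq_le ge_min le_min lexx /=; lra.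
    have : ~ (forall i, mu i * z i <= lam i * (r i)%:R).
      move=> hall; have : Z <= lsum lam r.
        by rewrite /Z /Zval /lsum; apply: ler_sum => i _; exact: hall i.
      lra.
    move/existsNP => [i hi]; exists i.
    have hi' : lam i * (r i)%:R < mu i * z i by rewrite ltNge; apply/negP.
    have hm : mm (upd r i (r i).+1) <= Z - lsum lam r - lam i.
      by rewrite /mm lsum_upS ge_min; apply/orP; left; lra.
    have hk : lam i / mu i <= kap * (mm r - mm (upd r i (r i).+1)).
      have := ler_wpM2r (ltW (lam0 i)) (kap_ge i).
      have : kap * lam i <= kap * (mm r - mm (upd r i (r i).+1)).
        by apply: ler_wpM2l => //; lra.
      rewrite mulrC; lra.
    have h1 : 1 + lam i / mu i <= expR (kap * (mm r - mm (upd r i (r i).+1))).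
      apply: le_trans (expR_ge1Dx _) _; by rewrite ler_expR.
    have mz : 0 <= mu i * z i by rewrite mulr_ge0 // ltW.
    have h2 := ler_wpM2l mz h1.
    have : mu i * z i * (1 + lam i / mu i) = mu i * z i + lam i * z i.
      by field; apply/negbT; rewrite gt_eqF.
    have := z1 i; have := lam0 i; rewrite -natr1 mulrDl mul1r; nra.
  set r2 := upd r i (r i).+1.
  have L2 : lsum lam r2 = lsum lam r + lam i by rewrite lsum_upS.
  have hp : poiw z r2 * (r i).+1%:R = poiw z r * z i by rewrite poiw_upS.
  have hL2 : lsum lam r2 <= Z by have := lam_le_Lam lam i; lra.
  have hn2 : Z - lsum lam r2 < n%:R * ell.
    by move: hn; rewrite L2 -natr1 mulrDl mul1r; have := ell_le i; lra.
  have [s [Hs hs]] := IH r2 hL2 hn2.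
  exists s; split => //.
  set x := kap * (mm r - mm r2) in Q.
  have step1 : psi r <= th i * expR x * psi r2.
    rewrite /psi L2 /th.
    set E := expR (ga * (lsum lam r - Z)).
    have Ep : 0 < E by apply: expR_gt0.
    have -> : ga * (lsum lam r + lam i - Z) = ga * lam i + ga * (lsum lam r - Z) by ring.
    rewrite expRD expRN -/E.
    have ap : 0 < expR (ga * lam i) by apply: expR_gt0.
    have zi : 0 < z i := zp i.
    have -> : poiw z r = poiw z r2 * (r i).+1%:R / z i.
      by rewrite hp; field; apply/negbT; rewrite gt_eqF.
    have -> : (expR (ga * lam i))^-1 * mu i / lam i * expR x *
        (expR (ga * lam i) * E * poiw z r2) = E * poiw z r2 * (mu i * expR x / lam i).
      by field; apply/andP; split; apply/negbT; rewrite gt_eqF.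
    have -> : E * (poiw z r2 * (r i).+1%:R / z i) = E * poiw z r2 * ((r i).+1%:R / z i)
      by ring.
    apply: ler_wpM2l; first by rewrite mulr_ge0 ?poiw_ge0 // ltW.
    rewrite ler_pdivrMr // mulrAC ler_pdivlMr //; lra.
  have Er2 : upd r2 i (r i) = r.
    by apply/ffunP => j; rewrite !ffunE; case: eqP => [->|].
  have step2 : th i * \prod_j G s j (r2 j) <= \prod_j G s j (r j).
    have := @prod_step R k (G s) r2 i (r i) (th i) (G0 s) (th0 i).
    rewrite Er2; apply; rewrite /G ffunE eqxx.
    case: (leqP (r i).+1 (s i)) => h.
      by rewrite (ltnW h) -(subnSK h) exprS.
    by rewrite mulr0; case: ifP => _ //; apply: exprn_ge0.
  apply: (le_trans step1).
  apply: le_trans (ler_wpM2l (mulr_ge0 (th0 i) (ltW (expR_gt0 x))) hs) _.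
  have ex : expR x * expR (kap * mm r2) = expR (kap * mm r).
    by rewrite -expRD /x; congr expR; ring.
  rewrite (_ : th i * expR x * (expR (kap * mm r2) * \prod_i0 G s i0 (r2 i0) * psi s)
     = (expR x * expR (kap * mm r2)) * (th i * \prod_i0 G s i0 (r2 i0)) * psi s); last by ring.
  rewrite ex -[leRHS]mulrA -[leLHS]mulrA; apply: ler_wpM2l; first exact: ltW (expR_gt0 _).
  exact: ler_wpM2r.
pose m := expR Z * (K * expR (kap * T)).
have m0 : 0 <= m by rewrite /m !mulr_ge0 // ltW // expR_gt0.
apply: le_trans (@transfer R k (Hminus lam Z) (Hset lam Z)
   (fun r => (1 + Z - lsum lam r) `^ C *
        \prod_(i < k) (expR (- z i) * (expR (lam i) * z i) ^+ r i / (r i)`!%:R))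
   (poiw z) G (fun i => (1 - th i)^-1) m _ _ _ _ _ _) _.
- move=> r; rewrite mulr_ge0 ?powR_ge0 // prod_exp_poiw mulr_ge0 ?poiw_ge0 //.
- by move=> r; rewrite poiw_ge0.
- exact: G0.
- exact: m0.
- by move=> s i N; apply: geomB.
- move=> r hr; have hZ : lsum lam r <= Z := hr.
  set x := Z - lsum lam r.
  have x0 : 0 <= x by rewrite /x; lra.
  have xl : x / ell < (Num.truncn (x / ell)).+1%:R.
    by have := truncn_itv (divr_ge0 x0 (ltW ell0)); case/andP.
  have hn : Z - lsum lam r < (Num.truncn (x / ell)).+1%:R * ell.
    by move: xl; rewrite ltr_pdivrMr.
  have [s [Hs hs]] := desc _ r hZ hn.
  exists s; split => //.
  rewrite prod_exp_poiw (_ : 1 + Z - lsum lam r = 1 + x); last by rewrite /x; ring.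
  have ha := absorb C0 e0 e1 x0.
  have hb : expR (C * eps * x) <= expR (eta * x) by rewrite ler_expR; nra.
  have e1x : (1 + x) `^ C <= K * expR (eta * x).
    exact: le_trans ha (ler_wpM2l (ltW K0) hb).
  apply: le_trans (ler_wpM2r _ e1x) _.
    by rewrite mulr_ge0 ?poiw_ge0 // ltW // expR_gt0.
  have e2 : expR (eta * x) * expR (lsum lam r) = expR Z * expR (ga * (lsum lam r - Z)).
    by rewrite -!expRD /x /ga; congr expR; ring.
  rewrite (_ : K * expR (eta * x) * (expR (lsum lam r) * poiw z r)
     = K * (expR (eta * x) * expR (lsum lam r)) * poiw z r); last by ring.
  rewrite e2 (_ : K * (expR Z * expR (ga * (lsum lam r - Z))) * poiw z r
     = (expR Z * K) * psi r); last by rewrite /psi; ring.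
  rewrite (_ : m * \prod_i G s i (r i) * poiw z s
     = (expR Z * K) * (expR (kap * T) * \prod_i G s i (r i) * poiw z s)); last by rewrite /m; ring.
  apply: ler_wpM2l; first by rewrite mulr_ge0 // ltW // expR_gt0.
  apply: (le_trans hs); apply: ler_pM.
  + by rewrite mulr_ge0 // ?prodr_ge0 // ltW // expR_gt0.
  + exact: psi0.
  + apply: ler_wpM2r; first exact: prodr_ge0.
    rewrite ler_expR; apply: ler_wpM2l => //; rewrite /mm ge_min; apply/orP; right; exact: lexx.
  + rewrite /psi -[leRHS]mul1r; apply: ler_wpM2r; first exact: poiw_ge0.
    rewrite expR_le1; case: Hs => _ hs2; nra.
rewrite (_ : m * \prod_i (1 - th i)^-1
   = expR Z * (K * expR (kap * T) * \prod_i (1 - th i)^-1)); last by rewrite /m; ring.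
exact: lexx.
Qed.

Unset Implicit Arguments.

Theorem lemma4p3 (R : realType) (k : nat) (lam mu : 'I_k -> R) (C : R) :
  (0 < k)%N -> 0 <= C ->
  (forall i, 0 < lam i) -> (forall i, 0 < mu i) ->
  ((forall i, lam i < mu i) ->
    exists c : R, 0 < c /\
      forall z : 'I_k -> R, (forall i, 1 <= z i) -> Lam lam <= Zval mu z ->
        (esum (Hplus lam (Zval mu z))
           (fun r => ((1 + lsum lam r - Zval mu z) `^ C * poiw z r)%:E)
         <= c%:E * Prob z (Hset lam (Zval mu z)))%E)
  /\
  ((forall i, ln (mu i / lam i) < lam i) ->
    exists c : R, 0 < c /\
      forall z : 'I_k -> R, (forall i, 1 <= z i) -> Lam lam <= Zval mu z ->
        (esum (Hminus lam (Zval mu z))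
           (fun r => ((1 + Zval mu z - lsum lam r) `^ C *
              \prod_(i < k) (expR (- z i) * (expR (lam i) * z i) ^+ r i / (r i)`!%:R))%:E)
         <= (expR (Zval mu z) * c)%:E * Prob z (Hset lam (Zval mu z)))%E).
Proof.
move=> k0 C0 lam0 mu0; split => h.
  exact: partA.
exact: partB.
Qed.
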